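(* Let $q_1,q_2$ be integers with $1\le q_1\le q_2$, $A=\begin{pmatrix}3q_1&0\\0&3q_2\end{pmatrix}$, $\mathcal{D}=\left\{\begin{pmatrix}0\\0\end{pmatrix},\begin{pmatrix}1\\0\end{pmatrix},\begin{pmatrix}0\\1\end{pmatrix}\right\}$, and let $\tau$ be a regular mapping with associated enumeration $\{\lambda_k\}_{k\in\mathbb{Z}}$ of $\tau^*(\Theta_3^\tau)$. For $n\ge1$ let $\alpha_n=\frac{3^n-1}{2}$ and $\mu_n=\delta_{A^{-1}\mathcal{D}}*\delta_{A^{-2}\mathcal{D}}*\cdots*\delta_{A^{-n}\mathcal{D}}$. Then $\mu_n$ is a spectral measure with spectrum $\Lambda_{\alpha_n}=\{\lambda_k\}_{k=-\alpha_n}^{\alpha_n}$.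
   Context: $\delta_E=\frac1{\#E}\sum_{e\in E}\delta_e$ for finite $E$. A measure $\mu$ is spectral with spectrum $\Lambda$ if $\{e^{-2\pi i\langle\lambda,x\rangle}:\lambda\in\Lambda\}$ is an orthonormal basis of $L^2(\mu)$. Notation: $\Gamma_{q_1,q_2}=\{(k,l)^T\in\mathbb{Z}^2:-\frac{3q_1}{2}\le k<\frac{3q_1}{2},-\frac{3q_2}{2}\le l<\frac{3q_2}{2}\}$; $x\equiv y\pmod A$ means $x-y\in A\mathbb{Z}^2$; $\mathcal{E}_{q_1}=\{(a_1,a_2)^T\in\Gamma_{q_1,q_2}:-\frac{q_1}{2}\le a_1<\frac{q_1}{2}\}$; $\Theta_3=\{-1,0,1\}$, $\Theta_3^n$ words of length $n$, $\Theta_3^*=\bigcup_{n\ge1}\Theta_3^n$, $\Theta_3^\infty$ infinite words, $I|_k$ length-$k$ prefix, $0^k$ word of $k$ zeros. A regular mapping is $\tau:\Theta_3^*\to\Gamma_{q_1,q_2}$ with (i) $\tau(0^ki)=i\begin{pmatrix}q_1\\-q_2\end{pmatrix}$ for $k\ge0$, $i\in\Theta_3$; (ii) for $k\ge1$, $I\in\Theta_3^k\setminus\{0^k\}$ there is $e_I\in\mathcal{E}_{q_1}$ with $\tau(Ij)\equiv e_I+j\begin{pmatrix}q_1\\-q_2\end{pmatrix}\pmod A$ for all $j\in\Theta_3$; (iii) for every $I\in\Theta_3^*$, $\tau(I0^n)=\mathbf{0}$ for all large $n$. Set $\tau^*(I)=\sum_{k\ge1}A^{k-1}\tau(I|_k)$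 for $I\in\Theta_3^\tau=\{I\in\Theta_3^\infty:\tau(I|_n)=\mathbf{0}\text{ for all large }n\}$. The enumeration: $\lambda_0=\mathbf{0}$, and for $k\ne0$ written uniquely as $k=i_1+i_23+\cdots+i_n3^{n-1}$ with $i_j\in\Theta_3$, $i_n\ne0$, $\lambda_k=\tau^*(i_1i_2\cdots i_n0^\infty)$. *)

(* Defs.v *)
From Stdlib Require Import Reals ZArith List Lia Lra.
From Coquelicot Require Import Coquelicot.
Import ListNotations.
Open Scope R_scope.

Definition theta3 (i : Z) : Prop := i = (-1)%Z \/ i = 0%Z \/ i = 1%Z.
(* finite word over Theta_3 (the paper's Theta_3^* consists of words of length >= 1) *)
Definition word3 (I : list Z) : Prop := I <> [] /\ List.Forall theta3 I.
Definition zeros (k : nat) : list Z := repeat 0%Z k.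

Definition vec := (Z * Z)%type.
Definition vadd (u v : vec) : vec := (fst u + fst v, snd u + snd v)%Z.
Definition vscal (c : Z) (v : vec) : vec := (c * fst v, c * snd v)%Z.
Definition vzero : vec := (0%Z, 0%Z).
Definition Apow (q1 q2 : Z) (k : nat) (v : vec) : vec :=
  ((3 * q1) ^ Z.of_nat k * fst v, (3 * q2) ^ Z.of_nat k * snd v)%Z.
Definition congA (q1 q2 : Z) (x y : vec) : Prop :=
  (3 * q1 | fst x - fst y)%Z /\ (3 * q2 | snd x - snd y)%Z.

(* Gamma_{q1,q2}: -3q1/2 <= k < 3q1/2, -3q2/2 <= l < 3q2/2 (cleared denominators) *)
Definition Gamma (q1 q2 : Z) (v : vec) : Prop :=
  (- 3 * q1 <= 2 * fst v < 3 * q1)%Z /\ (- 3 * q2 <= 2 * snd v < 3 * q2)%Z.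
Definition Eq1 (q1 q2 : Z) (v : vec) : Prop :=
  Gamma q1 q2 v /\ (- q1 <= 2 * fst v < q1)%Z.

Definition vq (q1 q2 : Z) : vec := (q1, - q2)%Z.

Definition regular_mapping (q1 q2 : Z) (tau : list Z -> vec) : Prop :=
  (forall I, word3 I -> Gamma q1 q2 (tau I)) /\
  (forall (k : nat) (i : Z), theta3 i -> tau (zeros k ++ [i]) = vscal i (vq q1 q2)) /\
  (forall I, word3 I -> I <> zeros (length I) ->
     exists e, Eq1 q1 q2 e /\
       forall j, theta3 j -> congA q1 q2 (tau (I ++ [j])) (vadd e (vscal j (vq q1 q2)))) /\
  (forall I, word3 I -> exists N : nat, forall n : nat, (N <= n)%nat -> tau (I ++ zeros n) = vzero).

(* infinite word: nat -> Z, letter index starting at 0; prefix I|_k *)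
Definition prefix (I : nat -> Z) (k : nat) : list Z := map I (seq 0 k).
Definition inf_word3 (I : nat -> Z) : Prop := forall m, theta3 (I m).
(* partial sum  sum_{k=1}^{N} A^{k-1} tau(I|_k) *)
Fixpoint tau_partial (q1 q2 : Z) (tau : list Z -> vec) (I : nat -> Z) (N : nat) : vec :=
  match N with
  | O => vzero
  | S N' => vadd (tau_partial q1 q2 tau I N') (Apow q1 q2 N' (tau (prefix I N)))
  end.
Definition in_Theta_tau (tau : list Z -> vec) (I : nat -> Z) : Prop :=
  inf_word3 I /\ exists N, forall n, (N <= n)%nat -> tau (prefix I n) = vzero.
(* tau^*(I) = v : the series (whose terms eventually vanish) sums to v *)
Definition tau_star_is (q1 q2 : Z) (tau : list Z -> vec) (I : nat -> Z) (v : vec) : Prop :=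
  in_Theta_tau tau I /\ exists N, forall n, (N <= n)%nat -> tau_partial q1 q2 tau I n = v.

Definition pad0 (w : list Z) : nat -> Z := fun m => nth m w 0%Z.

Fixpoint eval3 (w : list Z) : Z :=
  match w with [] => 0%Z | i :: w' => (i + 3 * eval3 w')%Z end.
Definition bt_repr (w : list Z) (k : Z) : Prop :=
  word3 w /\ last w 0%Z <> 0%Z /\ eval3 w = k.

Definition is_lambda (q1 q2 : Z) (tau : list Z -> vec) (k : Z) (v : vec) : Prop :=
  (k = 0%Z /\ v = vzero) \/
  (k <> 0%Z /\ exists w, bt_repr w k /\ tau_star_is q1 q2 tau (pad0 w) v).

Definition Lambda (q1 q2 : Z) (tau : list Z -> vec) (alpha : Z) (v : vec) : Prop :=
  exists k, (- alpha <= k <= alpha)%Z /\ is_lambda q1 q2 tau k v.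

(** * Finite discrete measures on R^2 as lists of (atom, mass) *)
Definition pt := (R * R)%type.
Definition dmeasure := list (pt * R).
Definition delta_set (E : list pt) : dmeasure :=
  map (fun e => (e, / INR (length E))) E.
Definition dconv (mu nu : dmeasure) : dmeasure :=
  flat_map (fun a => map (fun b => ((fst (fst a) + fst (fst b), snd (fst a) + snd (fst b)),
                                     snd a * snd b)) nu) mu.
Definition AinvD (q1 q2 : Z) (j : nat) : list pt :=
  [(0, 0); (/ (3 * IZR q1) ^ j, 0); (0, / (3 * IZR q2) ^ j)].
Fixpoint mu_n (q1 q2 : Z) (n : nat) : dmeasure :=
  match n with
  | O => [((0, 0), 1)]
  | S n' => dconv (mu_n q1 q2 n') (delta_set (AinvD q1 q2 (S n')))
  end.

Definition cis (t : R) : C := (cos t, sin t).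
Definition e_lam (l : vec) (x : pt) : C :=
  cis (- 2 * PI * (IZR (fst l) * fst x + IZR (snd l) * snd x)).
Definition ip (mu : dmeasure) (f g : pt -> C) : C :=
  fold_right Cplus 0 (map (fun a => RtoC (snd a) * (f (fst a) * Cconj (g (fst a))))%C mu).

(* {e_lambda : lambda ∈ Lambda} is an orthonormal basis of L^2(mu):
   orthonormal, and complete (only the zero element of L^2(mu) is orthogonal to all) *)
Definition spectral_with (mu : dmeasure) (Lam : vec -> Prop) : Prop :=
  (forall l l', Lam l -> Lam l' ->
      ip mu (e_lam l) (e_lam l') = (if (Z.eqb (fst l) (fst l') && Z.eqb (snd l) (snd l'))%bool
                                     then 1%C else 0%C)) /\
  (forall f : pt -> C, (forall l, Lam l -> ip mu f (e_lam l) = 0%C) -> ip mu f f = 0%C).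

(* Main.v *)
Require Import Defs.
From Stdlib Require Import Reals ZArith List Lia Lra.
From Coquelicot Require Import Coquelicot.
Import ListNotations.
Open Scope R_scope.


Definition csum {A : Type} (l : list A) (f : A -> C) : C :=
  fold_right Cplus 0%C (map f l).

Lemma csum_nil {A} (f : A -> C) : csum [] f = 0%C.
Proof. reflexivity. Qed.
Lemma csum_cons {A} (a : A) l (f : A -> C) : csum (a :: l) f = (f a + csum l f)%C.
Proof. reflexivity. Qed.
Lemma csum_app {A} (l1 l2 : list A) (f : A -> C) : csum (l1 ++ l2) f = (csum l1 f + csum l2 f)%C.
Proof. induction l1; simpl. unfold csum; simpl; ring.
  rewrite !csum_cons, IHl1. ring. Qed.
Lemma csum_map {A B} (g : A -> B) l (f : B -> C) : csum (map g l) f = csum l (fun a => f (g a)).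
Proof. unfold csum. rewrite map_map. reflexivity. Qed.
Lemma csum_flat_map {A B} (g : A -> list B) l (f : B -> C) :
  csum (flat_map g l) f = csum l (fun a => csum (g a) f).
Proof. induction l; simpl. reflexivity. rewrite csum_app, IHl. reflexivity. Qed.
Lemma csum_ext_in {A} (l : list A) (f g : A -> C) : (forall a, In a l -> f a = g a) -> csum l f = csum l g.
Proof. intros H. unfold csum. f_equal. apply map_ext_in. exact H. Qed.
Lemma csum_mull {A} (l : list A) (f : A -> C) (c : C) : (c * csum l f)%C = csum l (fun a => c * f a)%C.
Proof. induction l. unfold csum; simpl; ring. rewrite !csum_cons, <- IHl. ring. Qed.
Lemma csum_mulr {A} (l : list A) (f : A -> C) (c : C) : (csum l f * c)%C = csum l (fun a => f a * c)%C.
Proof. induction l. unfold csum; simpl; ring. rewrite !csum_cons, <- IHl. ring. Qed.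
Lemma csum_zero {A} (l : list A) (f : A -> C) : (forall a, In a l -> f a = 0%C) -> csum l f = 0%C.
Proof. intros H. induction l. reflexivity. rewrite csum_cons, H, IHl. ring.
  intros; apply H; right; auto. left; auto. Qed.
Lemma csum_plus {A} (l : list A) (f g : A -> C) : csum l (fun a => f a + g a)%C = (csum l f + csum l g)%C.
Proof. induction l. unfold csum; simpl; ring. rewrite !csum_cons, IHl. ring. Qed.
Lemma csum_swap {A B} (l1 : list A) (l2 : list B) (f : A -> B -> C) :
  csum l1 (fun a => csum l2 (fun b => f a b)) = csum l2 (fun b => csum l1 (fun a => f a b)).
Proof. induction l1. rewrite csum_nil. symmetry. apply csum_zero. intros. reflexivity.
  rewrite csum_cons, IHl1, <- csum_plus. reflexivity. Qed.

Definition E (t : R) : C := cis (-2 * PI * t).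
Lemma E_add a b : E (a + b) = (E a * E b)%C.
Proof. unfold E, cis. unfold Cmult; simpl.
  replace (-2 * PI * (a + b)) with (-2*PI*a + -2*PI*b) by ring.
  rewrite cos_plus, sin_plus. f_equal; ring. Qed.
Lemma E_0 : E 0 = 1%C.
Proof. unfold E, cis. rewrite Rmult_0_r, cos_0, sin_0. reflexivity. Qed.
Lemma E_conj a : Cconj (E a) = E (- a).
Proof. unfold E, cis, Cconj; simpl. replace (-2*PI*-a) with (-(-2*PI*a)) by ring.
  rewrite cos_neg, sin_neg. reflexivity. Qed.
Lemma E_nat (k : nat) : E (INR k) = 1%C.
Proof. unfold E, cis. replace (-2 * PI * INR k) with (0 + (- (2 * INR k * PI))) by ring.
  assert (Hc: cos (0 + - (2 * INR k * PI)) = 1).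
  { rewrite <- (cos_period (0 + - (2 * INR k * PI)) k). replace (0 + - (2 * INR k * PI) + 2 * INR k * PI) with 0 by ring. apply cos_0. }
  assert (Hs: sin (0 + - (2 * INR k * PI)) = 0).
  { rewrite <- (sin_period (0 + - (2 * INR k * PI)) k). replace (0 + - (2 * INR k * PI) + 2 * INR k * PI) with 0 by ring. apply sin_0. }
  rewrite Hc, Hs. reflexivity. Qed.
Lemma E_int (m : Z) : E (IZR m) = 1%C.
Proof. destruct (Z_le_gt_dec 0 m).
  - rewrite <- (Z2Nat.id m) by lia. rewrite <- INR_IZR_INZ. apply E_nat.
  - replace m with (- Z.of_nat (Z.to_nat (- m)))%Z by lia.
    rewrite opp_IZR, <- INR_IZR_INZ. rewrite <- E_conj, E_nat. unfold Cconj; simpl.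
    unfold RtoC. f_equal; ring. Qed.
Lemma E_shift a m : E (a + IZR m) = E a.
Proof. rewrite E_add, E_int. ring. Qed.
Lemma E_third : (E (1/3) + E (-(1/3)) = RtoC (-1))%C.
Proof. unfold E, cis, Cplus, RtoC; simpl.
  replace (-2 * PI * - (1/3)) with (2 * (PI/3)) by field.
  replace (-2 * PI * (1/3)) with (-(2 * (PI/3))) by field.
  rewrite cos_neg, sin_neg, cos_2PI3. f_equal; field. Qed.
Lemma E_third_c (c : Z) : (c = 1 \/ c = -1 \/ c = 2 \/ c = -2)%Z ->
  (E (IZR c / 3) + E (- (IZR c / 3)) = RtoC (-1))%C.
Proof. intros [ -> | [ -> | [ -> | -> ] ] ].
  - replace (IZR 1 / 3) with (1/3) by (simpl; field). apply E_third.
  - replace (IZR (-1) / 3) with (-(1/3)) by (simpl; field). rewrite Ropp_involutive.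
    rewrite <- E_third. ring.
  - replace (IZR 2 / 3) with (-(1/3) + IZR 1) by (simpl; field). rewrite E_shift.
    replace (- (-(1/3) + IZR 1)) with (1/3 + IZR (-1)) by (simpl; field). rewrite E_shift.
    rewrite <- E_third. ring.
  - replace (IZR (-2) / 3) with (1/3 + IZR (-1)) by (simpl; field). rewrite E_shift.
    replace (- (1/3 + IZR (-1))) with (-(1/3) + IZR 1) by (simpl; field). rewrite E_shift.
    apply E_third. Qed.
Lemma E_norm a : (E a * Cconj (E a))%C = 1%C.
Proof. rewrite E_conj, <- E_add. replace (a + - a) with 0 by ring. apply E_0. Qed.


Definition th3 : list Z := [(-1)%Z; 0%Z; 1%Z].
Fixpoint words (n : nat) : list (list Z) :=
  match n with
  | O => [[]]
  | S n' => flat_map (fun u => map (fun i => u ++ [i]) th3) (words n')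
  end.

Lemma In_th3 i : In i th3 <-> theta3 i.
Proof. unfold th3, theta3; simpl; split; intuition. Qed.

Lemma In_words n u : In u (words n) <-> (length u = n /\ List.Forall theta3 u).
Proof.
  revert u; induction n; intros u; cbn [words].
  - simpl. split. intros [<-|[]]. auto. intros [H _]. destruct u; simpl in H; auto; lia.
  - rewrite in_flat_map. split.
    + intros [v [Hv Hu]]. apply in_map_iff in Hu. destruct Hu as [i [<- Hi]].
      apply IHn in Hv. destruct Hv as [Hl Hf]. rewrite length_app; simpl. split. lia.
      apply List.Forall_app. split; auto. constructor; auto. apply In_th3; auto.
    + intros [Hl Hf]. destruct (exists_last (l:=u)) as [v [i Hvi]].
      { intros ->. simpl in Hl; lia. }
      subst u. exists v. apply List.Forall_app in Hf. destruct Hf as [Hf1 Hf2].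
      inversion Hf2; subst. split. apply IHn. rewrite length_app in Hl; simpl in Hl. split; auto; lia.
      apply in_map_iff. exists i; split; auto. apply In_th3; auto.
Qed.

Lemma length_words n : length (words n) = (3 ^ n)%nat.
Proof. induction n. reflexivity. cbn [words].
  rewrite (flat_map_constant_length (c := 3%nat)). rewrite IHn. simpl. lia.
  intros; reflexivity. Qed.

Fixpoint atoms (q1 q2 : Z) (n : nat) : list pt :=
  match n with
  | O => [(0, 0)]
  | S n' => flat_map (fun x => map (fun b => (fst x + fst b, snd x + snd b)) (AinvD q1 q2 (S n')))
                     (atoms q1 q2 n')
  end.

Lemma length_atoms q1 q2 n : length (atoms q1 q2 n) = (3 ^ n)%nat.
Proof. induction n. reflexivity. cbn [atoms].
  rewrite (flat_map_constant_length (c := 3%nat)).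
  change (length (atoms q1 q2 n) * 3 = 3 ^ S n)%nat. rewrite IHn. simpl. lia.
  intros; reflexivity. Qed.

Lemma INR3 : INR (length (AinvD 0 0 0)) = 3.
Proof. simpl. ring. Qed.

Lemma dconv_map (l : list pt) (El : list pt) c :
  dconv (map (fun x => (x, c)) l) (delta_set El) =
  map (fun x => (x, c * / INR (length El))) (flat_map (fun x => map (fun b => (fst x + fst b, snd x + snd b)) El) l).
Proof. induction l as [|a l IHl]. reflexivity.
  simpl. unfold dconv in *. simpl. rewrite IHl, map_app. f_equal.
  unfold delta_set. rewrite !map_map. reflexivity. Qed.

Lemma mu_atoms q1 q2 n : mu_n q1 q2 n = map (fun x => (x, (/3)^n)) (atoms q1 q2 n).
Proof.
  induction n. reflexivity.
  simpl mu_n. rewrite IHn, dconv_map. cbn [atoms]. apply map_ext. intros x. f_equal.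
  simpl. field.
Qed.

Lemma ip_atoms q1 q2 n f g :
  ip (mu_n q1 q2 n) f g = csum (atoms q1 q2 n) (fun x => RtoC ((/3)^n) * (f x * Cconj (g x)))%C.
Proof. unfold ip. rewrite mu_atoms. unfold csum. rewrite map_map. reflexivity. Qed.

Definition intpt (q1 q2 : Z) (n : nat) (x : pt) : Prop :=
  exists a1 a2 : Z, fst x * (3 * IZR q1) ^ n = IZR a1 /\ snd x * (3 * IZR q2) ^ n = IZR a2.

Lemma atoms_int q1 q2 n x : IZR q1 <> 0 -> IZR q2 <> 0 -> In x (atoms q1 q2 n) -> intpt q1 q2 n x.
Proof.
  intros H1 H2. revert x; induction n; intros x Hx.
  - simpl in Hx. destruct Hx as [<-|[]]. exists 0%Z, 0%Z. simpl. split; ring.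
  - simpl in Hx. apply in_flat_map in Hx. destruct Hx as [x' [Hx' Hb]].
    destruct (IHn x' Hx') as [a1 [a2 [Ha1 Ha2]]].
    assert (Q1: (3 * IZR q1) ^ S n <> 0) by (apply pow_nonzero; lra).
    assert (Q2: (3 * IZR q2) ^ S n <> 0) by (apply pow_nonzero; lra).
    assert (Q1': (3 * IZR q1) ^ n <> 0) by (apply pow_nonzero; lra).
    assert (Q2': (3 * IZR q2) ^ n <> 0) by (apply pow_nonzero; lra).
    simpl in Hb. destruct Hb as [<-|[<-|[<-|[]]]]; cbn [fst snd pow].
    + exists (a1 * (3 * q1))%Z, (a2 * (3*q2))%Z. rewrite !mult_IZR.
      rewrite <- Ha1, <- Ha2. cbn [fst snd pow]. split; ring.
    + exists (a1 * (3 * q1) + 1)%Z, (a2 * (3*q2))%Z. rewrite !plus_IZR, !mult_IZR.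
      rewrite <- Ha1, <- Ha2. cbn [fst snd pow]. split; field; lra.
    + exists (a1 * (3 * q1))%Z, (a2 * (3*q2) + 1)%Z. rewrite !plus_IZR, !mult_IZR.
      rewrite <- Ha1, <- Ha2. cbn [fst snd pow]. split; field; lra.
Qed.

Definition dot (l : vec) (x : pt) : R := IZR (fst l) * fst x + IZR (snd l) * snd x.
Lemma e_lam_E l x : e_lam l x = E (dot l x).
Proof. reflexivity. Qed.

Definition congn (q1 q2 : Z) (n : nat) (v w : vec) : Prop :=
  exists k1 k2 : Z, fst v = (fst w + (3 * q1) ^ Z.of_nat n * k1)%Z /\
                    snd v = (snd w + (3 * q2) ^ Z.of_nat n * k2)%Z.

Lemma IZR_pow3 q n : IZR ((3 * q) ^ Z.of_nat n) = (3 * IZR q) ^ n.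
Proof. rewrite <- pow_IZR, mult_IZR. reflexivity. Qed.

Lemma dot_congn q1 q2 n v w x : congn q1 q2 n v w -> intpt q1 q2 n x ->
  exists m : Z, dot v x = dot w x + IZR m.
Proof.
  intros [k1 [k2 [E1 E2]]] [a1 [a2 [A1 A2]]].
  exists (k1 * a1 + k2 * a2)%Z. unfold dot. rewrite E1, E2.
  rewrite !plus_IZR, !mult_IZR, !IZR_pow3, <- A1, <- A2. ring.
Qed.

Lemma e_congn q1 q2 n v w x : congn q1 q2 n v w -> intpt q1 q2 n x -> e_lam v x = e_lam w x.
Proof. intros H1 H2. destruct (dot_congn _ _ _ _ _ _ H1 H2) as [m Hm].
  rewrite !e_lam_E, Hm, E_shift. reflexivity. Qed.

Lemma dot_vadd v w x : dot (vadd v w) x = dot v x + dot w x.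
Proof. unfold dot, vadd; simpl. rewrite !plus_IZR. ring. Qed.

Lemma dot_Apow_int q1 q2 n t x : intpt q1 q2 n x ->
  exists m : Z, dot (Apow q1 q2 n t) x = IZR m.
Proof. intros [a1 [a2 [A1 A2]]]. exists (fst t * a1 + snd t * a2)%Z.
  unfold dot, Apow; cbn [fst snd]. rewrite !plus_IZR, !mult_IZR, !IZR_pow3, <- A1, <- A2. ring. Qed.


Lemma map_nth_seq0 (w : list Z) : map (fun m => nth m w 0%Z) (seq 0 (length w)) = w.
Proof. induction w as [|a w IH]. reflexivity.
  simpl. f_equal. rewrite <- seq_shift, map_map. simpl. exact IH. Qed.

Lemma prefix_pad0_len w : prefix (pad0 w) (length w) = w.
Proof. apply map_nth_seq0. Qed.

Lemma prefix_pad0_long w d : prefix (pad0 w) (length w + d) = w ++ zeros d.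
Proof. unfold prefix. rewrite seq_app, map_app. f_equal. apply map_nth_seq0.
  transitivity (map (fun _ => 0%Z) (seq (0 + length w) d)).
  apply map_ext_in. intros m Hm. apply in_seq in Hm. unfold pad0. apply nth_overflow. lia.
  rewrite map_const, length_seq. reflexivity. Qed.

Lemma tau_partial_ext q1 q2 tau I I' N : (forall m, (m < N)%nat -> I m = I' m) ->
  tau_partial q1 q2 tau I N = tau_partial q1 q2 tau I' N.
Proof. induction N; intros H. reflexivity. simpl. rewrite IHN by (intros; apply H; lia).
  f_equal. f_equal. f_equal. unfold prefix. apply map_ext_in. intros m Hm. apply in_seq in Hm.
  apply H. lia. Qed.

Definition T q1 q2 tau (u : list Z) : vec := tau_partial q1 q2 tau (pad0 u) (length u).

Lemma T_snoc q1 q2 tau u i :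
  T q1 q2 tau (u ++ [i]) = vadd (T q1 q2 tau u) (Apow q1 q2 (length u) (tau (u ++ [i]))).
Proof. unfold T. replace (length (u ++ [i])) with (S (length u)) by (rewrite length_app; simpl; lia).
  simpl tau_partial. f_equal.
  - apply tau_partial_ext. intros m Hm. unfold pad0. apply app_nth1. exact Hm.
  - f_equal. f_equal. replace (S (length u)) with (length (u ++ [i])) by (rewrite length_app; simpl; lia).
    apply prefix_pad0_len. Qed.

Lemma tau_partial_congn q1 q2 tau I n d :
  congn q1 q2 n (tau_partial q1 q2 tau I (n + d)) (tau_partial q1 q2 tau I n).
Proof. induction d.
  - exists 0%Z, 0%Z. rewrite Nat.add_0_r. lia.
  - destruct IHd as [k1 [k2 [H1 H2]]].
    replace (n + S d)%nat with (S (n + d)) by lia. simpl tau_partial.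
    exists (k1 + (3 * q1) ^ Z.of_nat d * fst (tau (prefix I (S (n + d)))))%Z,
           (k2 + (3 * q2) ^ Z.of_nat d * snd (tau (prefix I (S (n + d)))))%Z.
    unfold vadd, Apow. cbn [fst snd]. rewrite H1, H2.
    rewrite Nat2Z.inj_add, !Z.pow_add_r by lia. split; ring. Qed.

Lemma tau_step q1 q2 tau n u : regular_mapping q1 q2 tau -> In u (words n) ->
  exists e1 e2 : Z, forall i, theta3 i -> exists k1 k2 : Z,
    tau (u ++ [i]) = ((e1 + i * q1 + 3 * q1 * k1)%Z, (e2 - i * q2 + 3 * q2 * k2)%Z).
Proof.
  intros [HG [Hi [Hii Hiii]]] Hu.
  destruct (list_eq_dec Z.eq_dec u (zeros n)) as [->|Hne].
  - exists 0%Z, 0%Z. intros i Hth. exists 0%Z, 0%Z. rewrite Hi by exact Hth.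
    unfold vscal, vq; simpl. f_equal; ring.
  - apply In_words in Hu. destruct Hu as [Hl Hf].
    assert (Hw : word3 u). { split; auto. intros ->. apply Hne. simpl in Hl. subst. reflexivity. }
    destruct (Hii u Hw) as [e [_ He]]. { rewrite Hl. exact Hne. }
    exists (fst e), (snd e). intros i Hth. destruct (He i Hth) as [[k1 Hk1] [k2 Hk2]].
    exists k1, k2. unfold vadd, vscal, vq in *. cbn [fst snd] in *.
    destruct (tau (u ++ [i])) as [t1 t2]. cbn [fst snd] in *. f_equal; lia.
Qed.

Lemma prefix_pad0_zeros n m : prefix (pad0 (zeros n)) m = zeros m.
Proof. unfold prefix, pad0, zeros. transitivity (map (fun _ => 0%Z) (seq 0 m)).
  apply map_ext. intros k. apply nth_repeat. rewrite map_const, length_seq. reflexivity. Qed.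

Lemma tau_zeros q1 q2 tau m : regular_mapping q1 q2 tau -> (1 <= m)%nat -> tau (zeros m) = vzero.
Proof. intros [_ [Hi _]] Hm. destruct m. lia.
  unfold zeros. simpl repeat. rewrite repeat_cons. fold (zeros m).
  rewrite Hi by (right; left; reflexivity). reflexivity. Qed.

Lemma tau_partial_zeros q1 q2 tau n m : regular_mapping q1 q2 tau ->
  tau_partial q1 q2 tau (pad0 (zeros n)) m = vzero.
Proof. intros Hr. induction m. reflexivity. simpl. rewrite IHm, prefix_pad0_zeros, (tau_zeros q1 q2) by (auto; lia).
  unfold Apow, vadd, vzero. simpl. rewrite !Z.mul_0_r. reflexivity. Qed.

Lemma T_zeros q1 q2 tau n : regular_mapping q1 q2 tau -> T q1 q2 tau (zeros n) = vzero.
Proof. intros. unfold T. apply tau_partial_zeros; auto. Qed.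

Lemma eval3_bound w : List.Forall theta3 w ->
  (2 * Z.abs (eval3 w) <= 3 ^ Z.of_nat (length w) - 1)%Z.
Proof. induction w as [|a w IH]; intros H. simpl. lia.
  inversion H; subst. specialize (IH H3). change (eval3 (a :: w)) with (a + 3 * eval3 w)%Z. simpl length.
  rewrite Nat2Z.inj_succ, Z.pow_succ_r by lia. unfold theta3 in H2. lia. Qed.

Lemma eval3_lower w : w <> [] -> List.Forall theta3 w -> last w 0%Z <> 0%Z ->
  (3 ^ Z.of_nat (length w - 1) + 1 <= 2 * Z.abs (eval3 w))%Z.
Proof. induction w as [|a w IH]; intros Hne H Hl. congruence.
  inversion H; subst. destruct w as [|b w'].
  - simpl in Hl. change (eval3 [a]) with (a + 3 * 0)%Z. simpl length. unfold theta3 in H2. simpl Z.pow. lia.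
  - assert (IH' := IH ltac:(discriminate) H3 Hl).
    change (eval3 (a :: b :: w')) with (a + 3 * eval3 (b :: w'))%Z.
    replace (length (a :: b :: w') - 1)%nat with (S (length (b :: w') - 1)) by (simpl; lia).
    rewrite Nat2Z.inj_succ, Z.pow_succ_r by lia. unfold theta3 in H2. lia. Qed.

Lemma eval3_nonzero w : w <> [] -> List.Forall theta3 w -> last w 0%Z <> 0%Z -> eval3 w <> 0%Z.
Proof. intros H1 H2 H3. pose proof (eval3_lower w H1 H2 H3).
  pose proof (Z.pow_pos_nonneg 3 (Z.of_nat (length w - 1))). lia. Qed.

Lemma eval3_zeros m : eval3 (zeros m) = 0%Z.
Proof. induction m. reflexivity. simpl. fold (zeros m). rewrite IHm. reflexivity. Qed.
Lemma eval3_app_zeros w m : eval3 (w ++ zeros m) = eval3 w.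
Proof. induction w as [|a w IH]. apply eval3_zeros. simpl. rewrite IH. reflexivity. Qed.

Lemma decomp_trail u : List.Forall theta3 u -> u <> zeros (length u) ->
  exists w m, u = w ++ zeros m /\ w <> [] /\ last w 0%Z <> 0%Z.
Proof. induction u as [|a v IH] using rev_ind; intros Hf Hne.
  - exfalso. apply Hne. reflexivity.
  - apply List.Forall_app in Hf. destruct Hf as [Hf1 Hf2].
    destruct (Z.eq_dec a 0) as [->|Ha].
    + assert (Hv : v <> zeros (length v)).
      { intros Hv. apply Hne. rewrite length_app. simpl. rewrite Hv at 1.
        unfold zeros. rewrite repeat_app. reflexivity. }
      destruct (IH Hf1 Hv) as [w [m [-> [Hw Hl]]]]. exists w, (S m). split; auto.
      rewrite <- app_assoc. f_equal. unfold zeros. simpl. rewrite repeat_cons. reflexivity.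
    + exists (v ++ [a]), 0%nat. split. rewrite app_nil_r. reflexivity. split.
      destruct v; discriminate. rewrite last_last. exact Ha.
Qed.

Lemma pad0_app_zeros w k m : pad0 (w ++ zeros k) m = pad0 w m.
Proof. unfold pad0. destruct (Nat.lt_ge_cases m (length w)).
  - apply app_nth1; auto.
  - rewrite app_nth2 by lia. rewrite (nth_overflow w) by lia. unfold zeros. apply nth_repeat. Qed.

Lemma tau_star_unique q1 q2 tau I v v' :
  tau_star_is q1 q2 tau I v -> tau_star_is q1 q2 tau I v' -> v = v'.
Proof. intros [_ [N HN]] [_ [N' HN']]. rewrite <- (HN (N + N')%nat), <- (HN' (N + N')%nat) by lia.
  reflexivity. Qed.

Lemma tau_star_ext q1 q2 tau I I' v : (forall m, I m = I' m) ->
  tau_star_is q1 q2 tau I v -> tau_star_is q1 q2 tau I' v.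
Proof. intros He [[Hw [N HN]] [M HM]].
  assert (Hp : forall n, prefix I n = prefix I' n) by (intros; unfold prefix; apply map_ext; auto).
  split. split. intros m. rewrite <- He. apply Hw.
  exists N. intros n Hn. rewrite <- Hp. auto.
  exists M. intros n Hn. rewrite <- (tau_partial_ext q1 q2 tau I I') by auto. auto. Qed.

Lemma tau_star_congn q1 q2 tau u v : tau_star_is q1 q2 tau (pad0 u) v ->
  congn q1 q2 (length u) v (T q1 q2 tau u).
Proof. intros [_ [N HN]]. rewrite <- (HN (length u + N)%nat) by lia. unfold T.
  apply tau_partial_congn. Qed.

Lemma Forall_nth_theta w m : List.Forall theta3 w -> theta3 (nth m w 0%Z).
Proof. intros H. destruct (Nat.lt_ge_cases m (length w)).
  - rewrite List.Forall_forall in H. apply H. apply nth_In. auto.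
  - rewrite nth_overflow by lia. right; left; reflexivity. Qed.

Lemma tau_star_exists q1 q2 tau w : regular_mapping q1 q2 tau -> word3 w ->
  exists v, tau_star_is q1 q2 tau (pad0 w) v.
Proof.
  intros Hr Hw. pose proof Hr as [_ [_ [_ Hiii]]]. destruct (Hiii w Hw) as [N0 HN0].
  assert (Hz : forall n, (length w + N0 <= n)%nat -> tau (prefix (pad0 w) n) = vzero).
  { intros n Hn. replace n with (length w + (n - length w))%nat by lia.
    rewrite prefix_pad0_long. apply HN0. lia. }
  exists (tau_partial q1 q2 tau (pad0 w) (length w + N0)). split. split.
  - intros m. apply Forall_nth_theta. apply Hw.
  - exists (length w + N0)%nat. exact Hz.
  - exists (length w + N0)%nat. intros n Hn. induction Hn. reflexivity.
    simpl. rewrite IHHn, Hz by lia. unfold Apow, vadd, vzero. simpl. rewrite !Z.mul_0_r, !Z.add_0_r.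
    destruct (tau_partial q1 q2 tau (pad0 w) (length w + N0)). reflexivity.
Qed.


Lemma Forall_zeros k : List.Forall theta3 (zeros k).
Proof. induction k; constructor; auto. right; left; reflexivity. Qed.

Lemma words_Lambda q1 q2 tau n u : regular_mapping q1 q2 tau -> In u (words n) ->
  exists v, Lambda q1 q2 tau ((3 ^ Z.of_nat n - 1) / 2)%Z v /\ congn q1 q2 n v (T q1 q2 tau u).
Proof.
  intros Hr Hu. apply In_words in Hu as Hu'. destruct Hu' as [Hl Hf].
  assert (Hp : (1 <= 3 ^ Z.of_nat n)%Z) by (apply (Z.pow_le_mono_r 3 0); lia).
  destruct (list_eq_dec Z.eq_dec u (zeros n)) as [->|Hne].
  - exists vzero. split.
    + exists 0%Z. split. split. assert (0 <= (3 ^ Z.of_nat n - 1) / 2)%Z by (apply Z.div_pos; lia). lia.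
      apply Z.div_pos; lia. left; auto.
    + rewrite T_zeros by exact Hr. exists 0%Z, 0%Z. simpl. lia.
  - rewrite <- Hl in Hne. destruct (decomp_trail u Hf Hne) as [w [m [Hum [Hw Hlast]]]].
    assert (Hfw : List.Forall theta3 w) by (rewrite Hum in Hf; apply List.Forall_app in Hf; tauto).
    assert (Hw3 : word3 w) by (split; auto).
    destruct (tau_star_exists q1 q2 tau w Hr Hw3) as [v Hv].
    exists v. split.
    + exists (eval3 w). split.
      * pose proof (eval3_bound w Hfw).
        assert (Hlw : (length w <= n)%nat) by (rewrite <- Hl, Hum, length_app; lia).
        assert (3 ^ Z.of_nat (length w) <= 3 ^ Z.of_nat n)%Z by (apply Z.pow_le_mono_r; lia).
        assert (Z.abs (eval3 w) <= (3 ^ Z.of_nat n - 1) / 2)%Z by (apply Z.div_le_lower_bound; lia).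
        lia.
      * right. split. apply eval3_nonzero; auto. exists w. split. split; auto. exact Hv.
    + rewrite <- Hl. apply tau_star_congn. apply (tau_star_ext _ _ _ (pad0 w)); auto.
      intros k. rewrite Hum. symmetry. apply pad0_app_zeros.
Qed.

Lemma tau_star_zeros q1 q2 tau n : regular_mapping q1 q2 tau ->
  tau_star_is q1 q2 tau (pad0 (zeros n)) vzero.
Proof. intros Hr. split. split.
  - intros m. apply Forall_nth_theta, Forall_zeros.
  - exists 1%nat. intros m Hm. rewrite prefix_pad0_zeros. apply (tau_zeros q1 q2); auto.
  - exists 0%nat. intros m _. apply (tau_partial_zeros q1 q2); auto. Qed.

Lemma Lambda_words q1 q2 tau n l : regular_mapping q1 q2 tau ->
  Lambda q1 q2 tau ((3 ^ Z.of_nat n - 1) / 2)%Z l ->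
  exists u, In u (words n) /\ tau_star_is q1 q2 tau (pad0 u) l.
Proof.
  intros Hr [k [Hk [[-> ->] | [Hk0 [w [[Hw [Hl He]] Hts]]]]]].
  - exists (zeros n). split. apply In_words. split. apply repeat_length. apply Forall_zeros.
    apply tau_star_zeros; auto.
  - destruct Hw as [Hwn Hwf].
    pose proof (eval3_lower w Hwn Hwf Hl) as Hlow. rewrite He in Hlow.
    assert (H2 : (2 * ((3 ^ Z.of_nat n - 1) / 2) <= 3 ^ Z.of_nat n - 1)%Z) by (apply Z.mul_div_le; lia).
    assert (Hlt : (3 ^ Z.of_nat (length w - 1) < 3 ^ Z.of_nat n)%Z) by lia.
    apply Z.pow_lt_mono_r_iff in Hlt; [|lia|lia].
    assert (Hlen : (length w <= n)%nat) by (destruct w; [congruence|simpl in *; lia]).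
    exists (w ++ zeros (n - length w)). split.
    + apply In_words. split. rewrite length_app. unfold zeros. rewrite repeat_length. lia.
      apply List.Forall_app. split; auto. apply Forall_zeros.
    + apply (tau_star_ext _ _ _ (pad0 w)); auto. intros m. symmetry. apply pad0_app_zeros.
Qed.


Ltac izr := repeat first [rewrite plus_IZR | rewrite minus_IZR | rewrite mult_IZR | rewrite IZR_pow3 | rewrite opp_IZR].

Definition padd (x b : pt) : pt := (fst x + fst b, snd x + snd b).
Lemma dot_padd v x b : dot v (padd x b) = dot v x + dot v b.
Proof. unfold dot, padd; cbn [fst snd]. ring. Qed.

Lemma csum_th3 (f : Z -> C) : csum th3 f = (f (-1)%Z + f 0%Z + f 1%Z)%C.
Proof. unfold csum, th3. simpl. ring. Qed.
Lemma csum_AinvD q1 q2 n (f : pt -> C) :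
  csum (AinvD q1 q2 n) f = (f (0,0) + f ((/ (3 * IZR q1) ^ n)%R, 0) + f (0, (/ (3 * IZR q2) ^ n)%R))%C.
Proof. unfold csum, AinvD. simpl. ring. Qed.

Lemma K_zero q1 q2 n (t t' Tv : vec) i i' e1 e2 k1 k2 k1' k2' :
  IZR q1 <> 0 -> IZR q2 <> 0 -> i <> i' -> theta3 i -> theta3 i' ->
  t = ((e1 + i * q1 + 3 * q1 * k1)%Z, (e2 - i * q2 + 3 * q2 * k2)%Z) ->
  t' = ((e1 + i' * q1 + 3 * q1 * k1')%Z, (e2 - i' * q2 + 3 * q2 * k2')%Z) ->
  csum (AinvD q1 q2 (S n))
    (fun b => E (dot (vadd Tv (Apow q1 q2 n t)) b - dot (vadd Tv (Apow q1 q2 n t')) b)) = 0%C.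
Proof.
  intros H1 H2 Hii Hi Hi' -> ->. rewrite csum_AinvD.
  assert (P1 : (3 * IZR q1) ^ n <> 0) by (apply pow_nonzero; lra).
  assert (P2 : (3 * IZR q2) ^ n <> 0) by (apply pow_nonzero; lra).
  set (c := (i - i')%Z).
  assert (Hc : (c = 1 \/ c = -1 \/ c = 2 \/ c = -2)%Z) by (unfold c, theta3 in *; lia).
  unfold dot, vadd, Apow. cbn [fst snd].
  izr.
  replace (_ * 0 + _ * 0 - (_ * 0 + _ * 0)) with 0 by ring. rewrite E_0.
  match goal with |- (_ + E ?a + E ?b)%C = _ =>
    replace a with (IZR c / 3 + IZR (k1 - k1')) by (unfold c; izr; cbn [pow]; field; lra);
    replace b with (- (IZR c / 3) + IZR (k2 - k2')) by (unfold c; izr; cbn [pow]; field; lra) end.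
  rewrite !E_shift.
  rewrite <- Cplus_assoc, E_third_c by exact Hc. unfold RtoC. apply injective_projections; simpl; ring.
Qed.

Lemma ortho_ind q1 q2 tau : regular_mapping q1 q2 tau -> IZR q1 <> 0 -> IZR q2 <> 0 ->
  forall n u u', In u (words n) -> In u' (words n) -> u <> u' ->
  csum (atoms q1 q2 n) (fun x => E (dot (T q1 q2 tau u) x - dot (T q1 q2 tau u') x)) = 0%C.
Proof.
  intros Hr H1 H2. induction n; intros u u' Hu Hu' Hne.
  - simpl in Hu, Hu'. destruct Hu as [<-|[]]; destruct Hu' as [<-|[]]; congruence.
  - cbn [words] in Hu, Hu'.
    apply in_flat_map in Hu as [ub [Hub Hu]]. apply in_map_iff in Hu as [i [<- Hi]].
    apply in_flat_map in Hu' as [ub' [Hub' Hu']]. apply in_map_iff in Hu' as [i' [<- Hi']].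
    apply In_th3 in Hi. apply In_th3 in Hi'.
    assert (Hl : length ub = n) by (apply In_words in Hub; tauto).
    assert (Hl' : length ub' = n) by (apply In_words in Hub'; tauto).
    cbn [atoms]. rewrite csum_flat_map.
    set (K := csum (AinvD q1 q2 (S n))
                (fun b => E (dot (T q1 q2 tau (ub ++ [i])) b - dot (T q1 q2 tau (ub' ++ [i'])) b))).
    transitivity (csum (atoms q1 q2 n)
       (fun x => E (dot (T q1 q2 tau ub) x - dot (T q1 q2 tau ub') x) * K)%C).
    { apply csum_ext_in. intros x Hx. rewrite csum_map. unfold K. rewrite csum_mull.
      apply csum_ext_in. intros b _.
      pose proof (atoms_int q1 q2 n x H1 H2 Hx) as Hint.
      rewrite !T_snoc, Hl, Hl'.
      destruct (dot_Apow_int q1 q2 n (tau (ub ++ [i])) x Hint) as [m1 Hm1].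
      destruct (dot_Apow_int q1 q2 n (tau (ub' ++ [i'])) x Hint) as [m2 Hm2].
      change (fst x + fst b, snd x + snd b) with (padd x b). rewrite !dot_padd.
      rewrite <- E_add.
      match goal with |- E ?a = E ?c => replace a with (c + IZR (m1 - m2)) end.
      apply E_shift. rewrite minus_IZR, <- Hm1, <- Hm2, !dot_vadd. ring. }
    rewrite <- csum_mulr.
    destruct (list_eq_dec Z.eq_dec ub ub') as [<-|Hne'].
    + assert (Hii : i <> i') by (intros ->; apply Hne; reflexivity).
      destruct (tau_step q1 q2 tau n ub Hr Hub) as [e1 [e2 Hst]].
      destruct (Hst i Hi) as [k1 [k2 Hk]]. destruct (Hst i' Hi') as [k1' [k2' Hk']].
      unfold K. rewrite !T_snoc, Hl.
      rewrite (K_zero q1 q2 n _ _ _ i i' e1 e2 k1 k2 k1' k2' H1 H2 Hii Hi Hi' Hk Hk'). ring.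
    + rewrite (IHn ub ub' Hub Hub' Hne'). ring.
Qed.

Lemma phase_eq q1 q2 n (Tv t : vec) (x y x' y' a b : pt) s1 s2 i e1 e2 k1 k2 :
  IZR q1 <> 0 -> IZR q2 <> 0 -> intpt q1 q2 n x' -> intpt q1 q2 n y' ->
  x = padd x' a -> y = padd y' b ->
  fst a - fst b = IZR s1 / (3 * IZR q1) ^ (S n) -> snd a - snd b = IZR s2 / (3 * IZR q2) ^ (S n) ->
  t = ((e1 + i * q1 + 3 * q1 * k1)%Z, (e2 - i * q2 + 3 * q2 * k2)%Z) ->
  exists m : Z, dot (vadd Tv (Apow q1 q2 n t)) x - dot (vadd Tv (Apow q1 q2 n t)) y =
    (dot Tv x - dot Tv y + IZR e1 * IZR s1 / (3 * IZR q1) + IZR e2 * IZR s2 / (3 * IZR q2))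
    + IZR i * (IZR (s1 - s2) / 3) + IZR m.
Proof.
  intros H1 H2 [X1 [X2 [HX1 HX2]]] [Y1 [Y2 [HY1 HY2]]] -> -> Hs1 Hs2 ->.
  exists ((e1 + i*q1 + 3*q1*k1) * (X1 - Y1) + (e2 - i*q2 + 3*q2*k2) * (X2 - Y2) + k1 * s1 + k2 * s2)%Z.
  assert (P1 : (3 * IZR q1) ^ n <> 0) by (apply pow_nonzero; lra).
  assert (P2 : (3 * IZR q2) ^ n <> 0) by (apply pow_nonzero; lra).
  assert (Ex1 : fst x' = IZR X1 / (3 * IZR q1) ^ n) by (rewrite <- HX1; field; auto).
  assert (Ex2 : snd x' = IZR X2 / (3 * IZR q2) ^ n) by (rewrite <- HX2; field; auto).
  assert (Ey1 : fst y' = IZR Y1 / (3 * IZR q1) ^ n) by (rewrite <- HY1; field; auto).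
  assert (Ey2 : snd y' = IZR Y2 / (3 * IZR q2) ^ n) by (rewrite <- HY2; field; auto).
  assert (Ea1 : fst a = fst b + IZR s1 / (3 * IZR q1) ^ (S n)) by lra.
  assert (Ea2 : snd a = snd b + IZR s2 / (3 * IZR q2) ^ (S n)) by lra.
  unfold dot, vadd, Apow, padd. cbn [fst snd]. izr.
  rewrite Ex1, Ex2, Ey1, Ey2, Ea1, Ea2. cbn [pow]. field. lra.
Qed.

Lemma dual_inner q1 q2 tau n ub (x y x' y' a b : pt) s1 s2 :
  regular_mapping q1 q2 tau -> IZR q1 <> 0 -> IZR q2 <> 0 -> In ub (words n) ->
  intpt q1 q2 n x' -> intpt q1 q2 n y' -> x = padd x' a -> y = padd y' b ->
  fst a - fst b = IZR s1 / (3 * IZR q1) ^ (S n) -> snd a - snd b = IZR s2 / (3 * IZR q2) ^ (S n) ->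
  exists D, (s1 = 0%Z -> s2 = 0%Z -> D = dot (T q1 q2 tau ub) x - dot (T q1 q2 tau ub) y) /\
    csum th3 (fun i => E (dot (T q1 q2 tau (ub ++ [i])) x - dot (T q1 q2 tau (ub ++ [i])) y)) =
    (E D * (E (- (IZR (s1 - s2) / 3)) + 1 + E (IZR (s1 - s2) / 3)))%C.
Proof.
  intros Hr H1 H2 Hub Hx' Hy' Hx Hy Hs1 Hs2.
  assert (Hl : length ub = n) by (apply In_words in Hub; tauto).
  destruct (tau_step q1 q2 tau n ub Hr Hub) as [e1 [e2 Hst]].
  set (D := dot (T q1 q2 tau ub) x - dot (T q1 q2 tau ub) y + IZR e1 * IZR s1 / (3 * IZR q1)
            + IZR e2 * IZR s2 / (3 * IZR q2)).
  exists D. split.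
  { intros -> ->. unfold D. unfold Rdiv. ring. }
  assert (Hph : forall i, theta3 i ->
    E (dot (T q1 q2 tau (ub ++ [i])) x - dot (T q1 q2 tau (ub ++ [i])) y) =
    E (D + IZR i * (IZR (s1 - s2) / 3))).
  { intros i Hi. destruct (Hst i Hi) as [k1 [k2 Hk]]. rewrite T_snoc, Hl.
    destruct (phase_eq q1 q2 n (T q1 q2 tau ub) (tau (ub ++ [i])) x y x' y' a b s1 s2 i e1 e2 k1 k2
      H1 H2 Hx' Hy' Hx Hy Hs1 Hs2 Hk) as [m Hm].
    rewrite Hm. apply E_shift. }
  rewrite csum_th3, !Hph by (unfold theta3; lia).
  rewrite !E_add.
  replace (IZR (-1) * (IZR (s1 - s2) / 3)) with (- (IZR (s1 - s2) / 3)) by (simpl; ring).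
  replace (IZR 0 * (IZR (s1 - s2) / 3)) with 0 by ring.
  replace (IZR 1 * (IZR (s1 - s2) / 3)) with (IZR (s1 - s2) / 3) by ring.
  rewrite E_0. ring.
Qed.

Ltac nz := repeat split; repeat (apply pow_nonzero || apply Rmult_integral_contrapositive_currified); try assumption; try lra.
Ltac solve_s := cbn [fst snd pow]; field; nz.

Lemma dual_ind q1 q2 tau : regular_mapping q1 q2 tau -> IZR q1 <> 0 -> IZR q2 <> 0 ->
  forall n x y, In x (atoms q1 q2 n) -> In y (atoms q1 q2 n) -> x <> y ->
  csum (words n) (fun u => E (dot (T q1 q2 tau u) x - dot (T q1 q2 tau u) y)) = 0%C.
Proof.
  intros Hr H1 H2. induction n; intros x y Hx Hy Hxy.
  - simpl in Hx, Hy. destruct Hx as [<-|[]]; destruct Hy as [<-|[]]; congruence.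
  - cbn [atoms] in Hx, Hy.
    apply in_flat_map in Hx as [x' [Hx' Hx]]. apply in_map_iff in Hx as [a [Hxa Ha]].
    apply in_flat_map in Hy as [y' [Hy' Hy]]. apply in_map_iff in Hy as [b [Hyb Hb]].
    change (fst x' + fst a, snd x' + snd a) with (padd x' a) in Hxa.
    change (fst y' + fst b, snd y' + snd b) with (padd y' b) in Hyb.
    symmetry in Hxa, Hyb.
    pose proof (atoms_int q1 q2 n x' H1 H2 Hx') as Ix.
    pose proof (atoms_int q1 q2 n y' H1 H2 Hy') as Iy.
    cbn [words]. rewrite csum_flat_map.
    assert (Cne : forall s1 s2, (s1 - s2 = 1 \/ s1 - s2 = -1 \/ s1 - s2 = 2 \/ s1 - s2 = -2)%Z ->
      fst a - fst b = IZR s1 / (3 * IZR q1) ^ (S n) -> snd a - snd b = IZR s2 / (3 * IZR q2) ^ (S n) ->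
      csum (words n) (fun ub => csum (map (fun i => ub ++ [i]) th3)
         (fun u => E (dot (T q1 q2 tau u) x - dot (T q1 q2 tau u) y))) = 0%C).
    { intros s1 s2 Hc Hs1 Hs2. apply csum_zero. intros ub Hub. rewrite csum_map.
      destruct (dual_inner q1 q2 tau n ub x y x' y' a b s1 s2 Hr H1 H2 Hub Ix Iy Hxa Hyb Hs1 Hs2)
        as [D [_ HD]].
      rewrite HD.
      match goal with |- (?u * (?p + ?o + ?q))%C = _ => replace (p + o + q)%C with (o + (q + p))%C by ring end.
      rewrite E_third_c by exact Hc. unfold RtoC, Cplus, Cmult. cbn [fst snd].
      apply injective_projections; cbn [fst snd]; ring. }
    assert (Ceq : a = b ->
      csum (words n) (fun ub => csum (map (fun i => ub ++ [i]) th3)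
         (fun u => E (dot (T q1 q2 tau u) x - dot (T q1 q2 tau u) y))) = 0%C).
    { intros <-. assert (Hxy' : x' <> y') by (intros ->; apply Hxy; congruence).
      transitivity (RtoC 3 * csum (words n) (fun ub => E (dot (T q1 q2 tau ub) x' - dot (T q1 q2 tau ub) y')))%C.
      2: { rewrite (IHn x' y' Hx' Hy' Hxy'). ring. }
      rewrite csum_mull. apply csum_ext_in. intros ub Hub. rewrite csum_map.
      assert (Z1 : fst a - fst a = IZR 0 / (3 * IZR q1) ^ (S n)) by solve_s.
      assert (Z2 : snd a - snd a = IZR 0 / (3 * IZR q2) ^ (S n)) by solve_s.
      destruct (dual_inner q1 q2 tau n ub x y x' y' a a 0%Z 0%Z Hr H1 H2 Hub Ix Iy Hxa Hyb Z1 Z2)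
        as [D [HDe HD]].
      rewrite HD, (HDe eq_refl eq_refl).
      replace (IZR (0 - 0) / 3) with 0 by (simpl; field). replace (-0) with 0 by ring.
      rewrite E_0. rewrite Hxa, Hyb, !dot_padd.
      replace (dot (T q1 q2 tau ub) x' + dot (T q1 q2 tau ub) a - (dot (T q1 q2 tau ub) y' + dot (T q1 q2 tau ub) a))
        with (dot (T q1 q2 tau ub) x' - dot (T q1 q2 tau ub) y') by ring.
      unfold RtoC, Cplus, Cmult. apply injective_projections; cbn [fst snd]; ring. }
    simpl in Ha, Hb.
    destruct Ha as [<-|[<-|[<-|[]]]]; destruct Hb as [<-|[<-|[<-|[]]]];
      try (apply Ceq; reflexivity).
    + apply (Cne (-1)%Z 0%Z); [lia|solve_s|solve_s].
    + apply (Cne 0%Z (-1)%Z); [lia|solve_s|solve_s].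
    + apply (Cne 1%Z 0%Z); [lia|solve_s|solve_s].
    + apply (Cne 1%Z (-1)%Z); [lia|solve_s|solve_s].
    + apply (Cne 0%Z 1%Z); [lia|solve_s|solve_s].
    + apply (Cne (-1)%Z 1%Z); [lia|solve_s|solve_s].
Qed.


Definition pt_dec (x y : pt) : {x = y} + {x <> y}.
Proof. decide equality; apply Req_EM_T. Defined.

Lemma csum_const {A} (l : list A) (c : C) : csum l (fun _ => c) = (c * RtoC (INR (length l)))%C.
Proof. induction l as [|a l IH]. unfold csum; simpl. apply injective_projections; simpl; ring.
  rewrite csum_cons, IH. cbn [length]. rewrite S_INR. unfold RtoC, Cplus, Cmult.
  apply injective_projections; simpl; ring. Qed.

Lemma csum_ind (l : list pt) y (a : C) :
  csum l (fun x => if pt_dec x y then a else 0%C) = (a * RtoC (INR (count_occ pt_dec l y)))%C.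
Proof. induction l as [|b l IH]. unfold csum; simpl. apply injective_projections; simpl; ring.
  rewrite csum_cons, IH. simpl count_occ. destruct (pt_dec b y).
  - rewrite S_INR. unfold RtoC, Cplus, Cmult. apply injective_projections; simpl; ring.
  - ring. Qed.

Lemma Cmult_real_zero (z : C) (k : R) : k <> 0 -> (z * RtoC k)%C = 0%C -> z = 0%C.
Proof. intros Hk H. destruct z as [a b]. unfold Cmult, RtoC in H. simpl in H.
  injection H. intros Hb Ha.
  assert (a = 0). { apply (Rmult_eq_reg_r k); auto. lra. }
  assert (b = 0). { apply (Rmult_eq_reg_r k); auto. lra. }
  subst. reflexivity. Qed.

Lemma mass_one n : ((/3)^n * INR (3 ^ n)%nat = 1)%R.
Proof. rewrite pow_INR. simpl (INR 3). rewrite <- Rpow_mult_distr.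
  replace (/ 3 * (1+1+1)) with 1 by field. apply pow1. Qed.

Theorem lemma3p5 (q1 q2 : Z) (tau : list Z -> vec) (n : nat) :
  (1 <= q1)%Z -> (q1 <= q2)%Z -> regular_mapping q1 q2 tau -> (1 <= n)%nat ->
  spectral_with (mu_n q1 q2 n) (Lambda q1 q2 tau ((3 ^ Z.of_nat n - 1) / 2)%Z).
Proof.
  intros Hq1 Hq12 Hr Hn.
  assert (H1 : IZR q1 <> 0) by (apply not_0_IZR; lia).
  assert (H2 : IZR q2 <> 0) by (apply not_0_IZR; lia).
  split.
  - intros l l' Hl Hl'. rewrite ip_atoms.
    destruct (Z.eqb (fst l) (fst l') && Z.eqb (snd l) (snd l'))%bool eqn:Hb.
    + apply andb_prop in Hb. destruct Hb as [Hb1 Hb2]. apply Z.eqb_eq in Hb1, Hb2.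
      assert (l = l') by (apply injective_projections; auto). subst l'.
      transitivity (csum (atoms q1 q2 n) (fun _ => RtoC ((/3)^n))).
      { apply csum_ext_in. intros x _. rewrite e_lam_E, E_norm. ring. }
      rewrite csum_const, length_atoms. unfold RtoC, Cmult. simpl.
      rewrite mass_one. apply injective_projections; simpl; ring.
    + assert (Hne : l <> l').
      { intros <-. rewrite !Z.eqb_refl in Hb. discriminate. }
      destruct (Lambda_words q1 q2 tau n l Hr Hl) as [u [Hu Hlu]].
      destruct (Lambda_words q1 q2 tau n l' Hr Hl') as [u' [Hu' Hlu']].
      assert (Huu : u <> u') by (intros <-; apply Hne; eapply tau_star_unique; eauto).
      assert (Hlen : length u = n) by (apply In_words in Hu; tauto).
      assert (Hlen' : length u' = n) by (apply In_words in Hu'; tauto).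
      pose proof (tau_star_congn q1 q2 tau u l Hlu) as C1. rewrite Hlen in C1.
      pose proof (tau_star_congn q1 q2 tau u' l' Hlu') as C2. rewrite Hlen' in C2.
      transitivity (RtoC ((/3)^n) * csum (atoms q1 q2 n)
         (fun x => E (dot (T q1 q2 tau u) x - dot (T q1 q2 tau u') x)))%C.
      { rewrite csum_mull. apply csum_ext_in. intros x Hx.
        pose proof (atoms_int q1 q2 n x H1 H2 Hx) as Hi.
        rewrite (e_congn _ _ _ _ _ _ C1 Hi), (e_congn _ _ _ _ _ _ C2 Hi), !e_lam_E, E_conj, <- E_add.
        reflexivity. }
      rewrite (ortho_ind q1 q2 tau Hr H1 H2 n u u' Hu Hu' Huu). ring.
  - intros f Hf. rewrite ip_atoms. apply csum_zero. intros y Hy.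
    set (c := RtoC ((/3)^n)).
    assert (Hu0 : forall u, In u (words n) ->
      csum (atoms q1 q2 n) (fun x => c * (f x * Cconj (E (dot (T q1 q2 tau u) x))))%C = 0%C).
    { intros u Hu. destruct (words_Lambda q1 q2 tau n u Hr Hu) as [v [Hv Hc]].
      rewrite <- (Hf v Hv), ip_atoms. apply csum_ext_in. intros x Hx.
      pose proof (atoms_int q1 q2 n x H1 H2 Hx) as Hi.
      rewrite (e_congn _ _ _ _ _ _ Hc Hi), e_lam_E. reflexivity. }
    assert (Hsum : csum (words n) (fun u =>
       csum (atoms q1 q2 n) (fun x => c * (f x * Cconj (E (dot (T q1 q2 tau u) x))))%C
       * E (dot (T q1 q2 tau u) y))%C = 0%C).
    { apply csum_zero. intros u Hu. rewrite Hu0 by exact Hu. ring. }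
    assert (Hsum2 : csum (atoms q1 q2 n) (fun x => if pt_dec x y then f y else 0%C) = 0%C).
    { etransitivity; [| exact Hsum].
      transitivity (csum (atoms q1 q2 n) (fun x => c * f x *
          csum (words n) (fun u => E (dot (T q1 q2 tau u) y - dot (T q1 q2 tau u) x)))%C).
      - apply csum_ext_in. intros x Hx. destruct (pt_dec x y) as [<-|Hxy].
        + transitivity (c * f x * csum (words n) (fun _ => 1%C))%C.
          * rewrite csum_const, length_words. unfold c. 
            transitivity (f x * RtoC ((/3)^n * INR (3^n)%nat))%C.
            rewrite mass_one. unfold RtoC. apply injective_projections; simpl; ring.
            unfold RtoC, Cmult. apply injective_projections; simpl; ring.
          * f_equal. apply csum_ext_in. intros u _. replace (_ - _) with 0 by ring. symmetry; apply E_0.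
        + rewrite (dual_ind q1 q2 tau Hr H1 H2 n y x Hy Hx (not_eq_sym Hxy)). ring.
      - symmetry. transitivity (csum (words n) (fun u => csum (atoms q1 q2 n) (fun x =>
           c * (f x * Cconj (E (dot (T q1 q2 tau u) x))) * E (dot (T q1 q2 tau u) y))))%C.
        { apply csum_ext_in. intros u _. apply csum_mulr. }
        rewrite csum_swap. apply csum_ext_in. intros x Hx. rewrite csum_mull.
        apply csum_ext_in. intros u Hu.
        rewrite E_conj. replace (dot (T q1 q2 tau u) y - dot (T q1 q2 tau u) x)
          with (- dot (T q1 q2 tau u) x + dot (T q1 q2 tau u) y) by ring.
        rewrite E_add. ring. }
    rewrite csum_ind in Hsum2. apply Cmult_real_zero in Hsum2.
    + rewrite Hsum2. ring.
    + apply not_0_INR. apply (count_occ_In pt_dec) in Hy. lia.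
Qed.
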